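(* Consider the free abelian group $\mathbb Z\Delta$ on $\Delta=\{D_1,\dots,D_6\}$ and the elements $\sigma_1=D_1+D_2-D_3$, $\sigma_2=-D_1+D_2+D_3-D_4-D_6$, $\sigma_3=-D_2+D_3+D_4-D_5$, $\sigma_4=-D_3+D_4+D_5$, $\sigma_5=-D_5+D_6$, with $\Sigma=\{\sigma_1,\dots,\sigma_5\}$. Let $\gamma\in\mathbb N\Sigma$ be a covering difference in $\mathbb N\Delta$ with $\sigma_5\in\mathrm{supp}_\Sigma\gamma$. Then either $\gamma=\sigma_5=-D_5+D_6$ or $\gamma=\sigma_2+\sigma_4+\sigma_5=-D_1+D_2$. Moreover every other covering difference $\gamma\in\mathbb N\Sigma$ (i.e. different from these two) satisfies $\mathrm{ht}(\gamma^+)=2$.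
   Context: For $D,E\in\mathbb Z\Delta$ write $D\le_\Sigma E$ if $E-D\in\mathbb N\Sigma$, and $D<_\Sigma E$ if moreover $D\neq E$. For $E,F\in\mathbb N\Delta$ with $E<_\Sigma F$, say $F$ covers $E$ if there is no $G\in\mathbb N\Delta$ with $E<_\Sigma G<_\Sigma F$; then $F-E$ is called a covering difference in $\mathbb N\Delta$. For $E=\sum_D k_DD\in\mathbb Z\Delta$, $E^+=\sum_{k_D>0}k_DD$, $E^-=E^+-E$, and $\mathrm{ht}(E)=\sum_D k_D$. For $\gamma=\sum a_i\sigma_i\in\mathbb N\Sigma$ (the $\sigma_i$ are linearly independent), $\mathrm{supp}_\Sigma\gamma=\{\sigma_i:a_i>0\}$. *)

(* Defs.v *)
From HB Require Import structures.
From mathcomp Require Import all_boot all_order all_algebra.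
Set Implicit Arguments. Unset Strict Implicit. Unset Printing Implicit Defensive.
Import Order.TTheory GRing.Theory Num.Theory.
Local Open Scope ring_scope.

(* Z Delta : free abelian group on Delta = {D_1,...,D_6}; D_k is index k-1. *)
Definition ZD := {ffun 'I_6 -> int}.

Definition NDelta (D : ZD) : Prop := forall i, 0 <= D i.

Definition sigma_table : seq (seq int) :=
  [:: [:: 1; 1; -1; 0; 0; 0];
      [:: -1; 1; 1; -1; 0; -1];
      [:: 0; -1; 1; 1; -1; 0];
      [:: 0; 0; -1; 1; 1; 0];
      [:: 0; 0; 0; 0; -1; 1]].

(* sigma i = sigma_{i+1} *)
Definition sigma (i : 'I_5) : ZD := [ffun j : 'I_6 => nth 0 (nth [::] sigma_table i) j].

Definition comb (a : 'I_5 -> nat) : ZD := \sum_(i < 5) sigma i *+ a i.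

Definition NSigma (g : ZD) : Prop := exists a : 'I_5 -> nat, g = comb a.

Definition leS (D E : ZD) : Prop := NSigma (E - D).
Definition ltS (D E : ZD) : Prop := leS D E /\ D <> E.

Definition covers (E F : ZD) : Prop :=
  NDelta E /\ NDelta F /\ ltS E F /\
  ~ (exists G : ZD, NDelta G /\ ltS E G /\ ltS G F).

Definition covering_difference (g : ZD) : Prop :=
  exists E F : ZD, covers E F /\ g = F - E.

(* sigma_i in supp_Sigma gamma (well-defined since the sigma_i are linearly
   independent: the coefficient vector is unique) *)
Definition in_supp (i : 'I_5) (g : ZD) : Prop :=
  exists a : 'I_5 -> nat, g = comb a /\ (0 < a i)%N.

Definition posp (E : ZD) : ZD := [ffun j => Num.max (E j) 0].
Definition ht (E : ZD) : int := \sum_(j < 6) E j.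

Definition s1 : 'I_5 := @Ordinal 5 1 isT.
Definition s3 : 'I_5 := @Ordinal 5 3 isT.
Definition s4 : 'I_5 := @Ordinal 5 4 isT.

(* Main.v *)
Require Import Defs.
From HB Require Import structures.
From mathcomp Require Import all_boot all_order all_algebra.
From mathcomp Require Import zify.
Import Order.TTheory GRing.Theory Num.Theory.
Local Open Scope ring_scope.

Definition tb (l : seq nat) : 'I_5 -> nat := fun i => nth 0%N l i.

Definition gam (p q r s t : int) : seq int :=
  [:: p - q; p + q - r; - p + q + r - s; - q + r + s; - r + s - t; - q + t].

Definition gamf (p q r s t : int) : ZD := [ffun j : 'I_6 => nth 0 (gam p q r s t) j].

Lemma comb_ext (a b : 'I_5 -> nat) : (forall i, a i = b i) -> comb a = comb b.
Proof. by move=> H; rewrite /comb; apply: eq_bigr => i _; rewrite H. Qed.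

Lemma combE5 p q r s t :
  comb (tb [:: p; q; r; s; t]) = gamf p%:Z q%:Z r%:Z s%:Z t%:Z.
Proof.
apply/ffunP => j; rewrite /comb sum_ffunE !big_ord_recr big_ord0 /= !ffunMnE !ffunE.
case: j => [[|[|[|[|[|[|j]]]]]] Hj] //=; rewrite /tb /= ?mul0rn ?mulNrn ?natz; lia.
Qed.

Lemma gamf_eq p q r s t p' q' r' s' t' :
  gamf p q r s t = gamf p' q' r' s' t' ->
  [/\ p = p', q = q', r = r', s = s' & t = t'].
Proof.
move=> H.
have h := fun j => congr1 (fun f : ZD => f j) H.
have := h (@Ordinal 6 0 isT); have := h (@Ordinal 6 1 isT); have := h (@Ordinal 6 2 isT);
have := h (@Ordinal 6 3 isT); have := h (@Ordinal 6 4 isT); have := h (@Ordinal 6 5 isT).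
rewrite !ffunE /= => *; split; lia.
Qed.

Lemma addKZ (E c : ZD) : E + c - E = c.
Proof. by rewrite addrAC subrr add0r. Qed.
Lemma addZ0 (E c : ZD) : E = E + c -> c = 0.
Proof. by move=> /(congr1 (fun x => x - E)); rewrite addKZ subrr. Qed.
Lemma subDZ (F E c : ZD) : F - (E + c) = (F - E) - c.
Proof. by rewrite opprD addrA. Qed.

Lemma test E F (p q r s t b0 b1 b2 b3 b4 : nat) :
  covers E F -> F - E = comb (tb [:: p; q; r; s; t]) ->
  (b0 <= p)%N -> (b1 <= q)%N -> (b2 <= r)%N -> (b3 <= s)%N -> (b4 <= t)%N ->
  (0 < b0 + b1 + b2 + b3 + b4)%N ->
  (b0 < p \/ b1 < q \/ b2 < r \/ b3 < s \/ b4 < t)%N ->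
  exists j : 'I_6, nth 0 (gam b0 b1 b2 b3 b4) j < 0 /\
    nth 0 (gam b0 b1 b2 b3 b4) j < nth 0 (gam p q r s t) j.
Proof.
move=> [NE [NF [_ NoG]]] Hg h0 h1 h2 h3 h4 hpos hlt.
case: (pickP (fun j : 'I_6 => (nth 0 (gam b0 b1 b2 b3 b4) j < 0) &&
    (nth 0 (gam b0 b1 b2 b3 b4) j < nth 0 (gam p q r s t) j))) => [j /andP[] ? ?|Hn].
  by exists j.
exfalso; apply: NoG; exists (E + comb (tb [:: b0; b1; b2; b3; b4])).
rewrite combE5 in Hg *.
split; [|split].
- move=> j; have := NE j; have := NF j; have := congr1 (fun f : ZD => f j) Hg.
  move: (Hn j) => /= /negbT; rewrite combE5 !ffunE negb_and -!leNgt => /orP.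
  move: (gam b0 b1 b2 b3 b4)`_j (gam p q r s t)`_j (F j) (E j) => x y u v /=.
  have H : forall x y u v : int, (0 <= x \/ y <= x -> u - v = y -> 0 <= u -> 0 <= v -> 0 <= v + x)
    by move=> *; lia.
  exact: H.
- split; first by exists (tb [:: b0; b1; b2; b3; b4]); rewrite combE5 addKZ.
  move=> /addZ0; rewrite combE5.
  have -> : (0 : ZD) = gamf 0 0 0 0 0 by apply/ffunP=> j; rewrite !ffunE; case: j => [[|[|[|[|[|[|j]]]]]] Hj].
  by move/gamf_eq => [] *; lia.
- split.
    exists (tb [:: p - b0; q - b1; r - b2; s - b3; t - b4]%N); rewrite subDZ Hg !combE5.
    apply/ffunP => j; rewrite !ffunE.
    case: j => [[|[|[|[|[|[|j]]]]]] Hj] //=; lia.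
  move=> HG; have : F - E = gamf b0 b1 b2 b3 b4 by rewrite -HG addKZ combE5.
  by rewrite Hg => /gamf_eq [] *; lia.
Qed.

Lemma nonzero E F p q r s t :
  covers E F -> F - E = comb (tb [:: p; q; r; s; t]) -> (0 < p + q + r + s + t)%N.
Proof.
move=> [_ [_ [[_ HEF] _]]] Hg.
case: (posnP (p + q + r + s + t)) => // H0; exfalso; apply: HEF.
move: Hg; have [-> -> -> -> ->] : [/\ p = 0, q = 0, r = 0, s = 0 & t = 0]%N by split; lia.
rewrite combE5.
have -> : gamf 0 0 0 0 0 = 0 by apply/ffunP=> j; rewrite !ffunE; case: j => [[|[|[|[|[|[|j]]]]]] Hj].
by move/subr0_eq.
Qed.

Ltac use_test HC Hg x0 x1 x2 x3 x4 :=
  let j := fresh "j" in let H1 := fresh "H1" in let H2 := fresh "H2" in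
  have [j [H1 H2]] := @test _ _ _ _ _ _ _ x0 x1 x2 x3 x4 HC Hg
     ltac:(lia) ltac:(lia) ltac:(lia) ltac:(lia) ltac:(lia) ltac:(by []) ltac:(lia);
  move: j H1 H2; case=> [[|[|[|[|[|[|?]]]]]] ?] //= H1 H2.

Lemma bound E F p q r s t :
  covers E F -> F - E = comb (tb [:: p; q; r; s; t]) ->
  (p <= 1 /\ q <= 1 /\ r <= 1 /\ s <= 1 /\ t <= 1)%N.
Proof.
move=> HC Hg.
have [//|Hb] : (p <= 1 /\ q <= 1 /\ r <= 1 /\ s <= 1 /\ t <= 1)%N \/
               (1 < p \/ 1 < q \/ 1 < r \/ 1 < s \/ 1 < t)%N by lia.
exfalso.
(have [Hp|Hp] : (p = 0 \/ 1 <= p)%N by lia);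
(have [Hq|Hq] : (q = 0 \/ 1 <= q)%N by lia);
(have [Hr|Hr] : (r = 0 \/ 1 <= r)%N by lia);
(have [Hs|Hs] : (s = 0 \/ 1 <= s)%N by lia);
(have [Ht|Ht] : (t = 0 \/ 1 <= t)%N by lia);
[ lia
  | (use_test HC Hg 0%N 0%N 0%N 0%N 1%N; lia)
  | (use_test HC Hg 0%N 0%N 0%N 1%N 0%N; lia)
  | (use_test HC Hg 0%N 0%N 0%N 1%N 0%N; lia)
  | (use_test HC Hg 0%N 0%N 1%N 0%N 0%N; lia)
  | (use_test HC Hg 0%N 0%N 0%N 0%N 1%N; lia)
  | (use_test HC Hg 0%N 0%N 1%N 1%N 0%N; lia)
  | (use_test HC Hg 0%N 0%N 1%N 1%N 0%N; lia)
  | (use_test HC Hg 0%N 1%N 0%N 0%N 0%N; lia)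
  | (use_test HC Hg 0%N 0%N 0%N 0%N 1%N; lia)
  | (use_test HC Hg 0%N 1%N 0%N 1%N 0%N; lia)
  | (use_test HC Hg 0%N 1%N 0%N 1%N 1%N; lia)
  | (use_test HC Hg 0%N 1%N 1%N 0%N 0%N; lia)
  | (use_test HC Hg 0%N 0%N 0%N 0%N 1%N; lia)
  | (use_test HC Hg 0%N 1%N 0%N 1%N 0%N; lia)
  | (use_test HC Hg 0%N 1%N 0%N 1%N 1%N; lia)
  | (use_test HC Hg 1%N 0%N 0%N 0%N 0%N; lia)
  | (use_test HC Hg 0%N 0%N 0%N 0%N 1%N; lia)
  | (use_test HC Hg 0%N 0%N 0%N 1%N 0%N; lia)
  | (use_test HC Hg 0%N 0%N 0%N 1%N 0%N; lia)
  | (use_test HC Hg 1%N 0%N 1%N 0%N 0%N; lia)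
  | (use_test HC Hg 0%N 0%N 0%N 0%N 1%N; lia)
  | (use_test HC Hg 0%N 0%N 0%N 1%N 0%N; use_test HC Hg 0%N 0%N 1%N 1%N 0%N; lia)
  | (use_test HC Hg 0%N 0%N 0%N 0%N 1%N; use_test HC Hg 0%N 0%N 0%N 1%N 0%N; lia)
  | (use_test HC Hg 1%N 1%N 0%N 0%N 0%N; lia)
  | (use_test HC Hg 0%N 0%N 0%N 0%N 1%N; lia)
  | (use_test HC Hg 0%N 0%N 0%N 1%N 0%N; use_test HC Hg 0%N 1%N 0%N 1%N 0%N; lia)
  | (use_test HC Hg 0%N 0%N 0%N 1%N 0%N; use_test HC Hg 0%N 1%N 0%N 1%N 1%N; lia)
  | (use_test HC Hg 1%N 0%N 1%N 0%N 0%N; lia)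
  | (use_test HC Hg 0%N 0%N 0%N 0%N 1%N; lia)
  | (use_test HC Hg 1%N 1%N 1%N 1%N 0%N; lia)
  | (use_test HC Hg 0%N 0%N 0%N 0%N 1%N; use_test HC Hg 0%N 0%N 0%N 1%N 0%N; use_test HC Hg 0%N 1%N 0%N 1%N 1%N; lia) ].
Qed.

Lemma sig4E : sigma s4 = gamf 0 0 0 0 1.
Proof. by apply/ffunP=> j; rewrite !ffunE; case: j => [[|[|[|[|[|[|j]]]]]] Hj]. Qed.

Lemma sig134E : sigma s1 + sigma s3 + sigma s4 = gamf 0 1 0 1 1.
Proof. by apply/ffunP=> j; rewrite !ffunE; case: j => [[|[|[|[|[|[|j]]]]]] Hj]. Qed.

Lemma comb_tb (a : 'I_5 -> nat) :
  comb a = comb (tb [:: a ord0; a (@Ordinal 5 1 isT); a (@Ordinal 5 2 isT);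
                        a (@Ordinal 5 3 isT); a (@Ordinal 5 4 isT)]).
Proof.
apply: comb_ext => -[[|[|[|[|[|i]]]]] Hi] //; rewrite /tb /=; congr (a _); exact: val_inj.
Qed.

Lemma in_supp_t (p q r s t : nat) : in_supp s4 (gamf p q r s t) -> (0 < t)%N.
Proof.
move=> [a [H Ha]]; move: H; rewrite comb_tb combE5 => /gamf_eq [] _ _ _ _ Ht.
move: Ha; rewrite (_ : s4 = @Ordinal 5 4 isT); last exact: val_inj.
lia.
Qed.

Ltac cov_case :=
  split;
  [ move=> /in_supp_t Ht; first [ lia | (left; rewrite sig4E; reflexivity)
                                 | (right; rewrite sig134E; reflexivity) ]
  | let H1 := fresh "H1" in let H2 := fresh "H2" in
    intros H1 H2; rewrite ?sig4E ?sig134E in H1 H2;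
    first [ by exfalso; apply: H1 | by exfalso; apply: H2
          | by rewrite /ht /posp !big_ord_recr big_ord0 /= !ffunE /= ] ].

Theorem lemma2p7 (g : ZD) :
  NSigma g -> covering_difference g ->
  (in_supp s4 g -> g = sigma s4 \/ g = sigma s1 + sigma s3 + sigma s4) /\
  (g <> sigma s4 -> g <> sigma s1 + sigma s3 + sigma s4 -> ht (posp g) = 2).
Proof.
move=> [a Ha] [E [F [HC HgE]]].
move: HgE; rewrite Ha comb_tb.
move: (a ord0) (a (@Ordinal 5 1 isT)) (a (@Ordinal 5 2 isT)) (a (@Ordinal 5 3 isT))
  (a (@Ordinal 5 4 isT)) => p q r s t Hg.
have [Bp [Bq [Br [Bs Bt]]]] := bound E F p q r s t HC (esym Hg).
rewrite combE5; move: Hg => /esym Hg.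
clear Ha a g.
(have [Hp|Hp] : (p = 0 \/ p = 1)%N by lia); subst p;
(have [Hq|Hq] : (q = 0 \/ q = 1)%N by lia); subst q;
(have [Hr|Hr] : (r = 0 \/ r = 1)%N by lia); subst r;
(have [Hs|Hs] : (s = 0 \/ s = 1)%N by lia); subst s;
(have [Ht|Ht] : (t = 0 \/ t = 1)%N by lia); subst t;
[ exfalso; have := nonzero E F _ _ _ _ _ HC Hg; lia
  | cov_case
  | cov_case
  | exfalso; (use_test HC Hg 0%N 0%N 0%N 1%N 0%N); lia
  | cov_case
  | exfalso; (use_test HC Hg 0%N 0%N 0%N 0%N 1%N); lia
  | cov_case
  | exfalso; (use_test HC Hg 0%N 0%N 0%N 0%N 1%N); lia
  | cov_case
  | exfalso; (use_test HC Hg 0%N 0%N 0%N 0%N 1%N); lia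
  | cov_case
  | cov_case
  | cov_case
  | exfalso; (use_test HC Hg 0%N 0%N 0%N 0%N 1%N); lia
  | exfalso; (use_test HC Hg 0%N 1%N 0%N 1%N 0%N); lia
  | exfalso; (use_test HC Hg 0%N 0%N 0%N 0%N 1%N); lia
  | cov_case
  | exfalso; (use_test HC Hg 0%N 0%N 0%N 0%N 1%N); lia
  | exfalso; (use_test HC Hg 0%N 0%N 0%N 1%N 0%N); lia
  | exfalso; (use_test HC Hg 0%N 0%N 0%N 1%N 0%N); lia
  | cov_case
  | exfalso; (use_test HC Hg 0%N 0%N 0%N 0%N 1%N); lia
  | exfalso; (use_test HC Hg 0%N 0%N 0%N 1%N 0%N); lia
  | exfalso; (use_test HC Hg 0%N 0%N 0%N 0%N 1%N); lia
  | cov_case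
  | exfalso; (use_test HC Hg 0%N 0%N 0%N 0%N 1%N); lia
  | exfalso; (use_test HC Hg 0%N 0%N 0%N 1%N 0%N); lia
  | exfalso; (use_test HC Hg 0%N 0%N 0%N 1%N 0%N); lia
  | exfalso; (use_test HC Hg 1%N 0%N 1%N 0%N 0%N); lia
  | exfalso; (use_test HC Hg 0%N 0%N 0%N 0%N 1%N); lia
  | cov_case
  | exfalso; (use_test HC Hg 0%N 0%N 0%N 0%N 1%N); lia ].
Qed.
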